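(* Let $\odot$ be a pseudo-multiplication on $[0,\infty]$ with left identity $1_{\odot}$, and let $O(t)=\inf_{s>0} s\odot t$. Then there exists some $t>0$ which is $\odot$-finite (i.e. $O(t)=0$) if and only if $1_{\odot}$ is $\odot$-finite (i.e. $O(1_{\odot})=0$).
   Context: A pseudo-multiplication is a binary operation $\odot:[0,\infty]\times[0,\infty]\to[0,\infty]$ such that: $\odot$ is associative; $\odot$ is continuous on $(0,\infty)\times[0,\infty]$; for every $t$, the map $s\mapsto s\odot t$ is continuous on $(0,\infty]$; $\odot$ is nondecreasing in each argument; there is a left identity element $1_{\odot}$, i.e. $1_{\odot}\odot t=t$ for all $t$; there are no zero divisors, i.e. $s\odot t=0$ implies $s=0$ or $t=0$; and $0$ is an annihilator, i.e. $0\odot t=t\odot 0=0$ for all $t$. For $t\in[0,\infty]$ put $O(t)=\inf_{s>0} s\odot t$. An element $t$ is called $\odot$-finite if $O(t)=0$, and $\odot$-infinite otherwise. *)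

(* Defs.v *)
From HB Require Import structures.
From mathcomp Require Import all_boot all_order all_algebra.
From mathcomp Require Import all_classical all_reals all_analysis.
Set Implicit Arguments. Unset Strict Implicit. Unset Printing Implicit Defensive.
Import Order.TTheory GRing.Theory Num.Theory.
Local Open Scope classical_set_scope.
Local Open Scope ereal_scope.

(* A pseudo-multiplication on [0,+oo], encoded as a binary operation on \bar R
   whose axioms are required only on nonnegative arguments. [one] is the left
   identity 1_odot. *)
Record pseudo_mult (R : realType) (op : \bar R -> \bar R -> \bar R) (one : \bar R)
  : Prop := PseudoMult {
  pm_range : forall s t, 0 <= s -> 0 <= t -> 0 <= op s t;
  pm_assoc : forall s t u, 0 <= s -> 0 <= t -> 0 <= u ->
      op (op s t) u = op s (op t u);
  pm_cont : {within [set p : \bar R * \bar R | 0 < p.1 < +oo /\ 0 <= p.2],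
              continuous (fun p => op p.1 p.2)};
  pm_cont_left : forall t, 0 <= t ->
      {within [set s : \bar R | 0 < s], continuous (fun s => op s t)};
  pm_mono : forall s s' t t', 0 <= s -> s <= s' -> 0 <= t -> t <= t' ->
      op s t <= op s' t';
  pm_one_ge0 : 0 <= one;
  pm_left_id : forall t, 0 <= t -> op one t = t;
  pm_no_zero_div : forall s t, 0 <= s -> 0 <= t -> op s t = 0 -> s = 0 \/ t = 0;
  pm_annihil : forall t, 0 <= t -> op 0 t = 0 /\ op t 0 = 0
}.

Definition pmO (R : realType) (op : \bar R -> \bar R -> \bar R) (t : \bar R) : \bar R :=
  ereal_inf [set op s t | s in [set s : \bar R | 0 < s]].

Definition pm_finite (R : realType) (op : \bar R -> \bar R -> \bar R) (t : \bar R) : Prop :=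
  pmO op t = 0.

(* Main.v *)
Require Import Defs.
From mathcomp Require Import all_boot all_order all_algebra.
From mathcomp Require Import all_classical all_reals all_analysis.
Import Order.TTheory GRing.Theory Num.Theory.
Local Open Scope classical_set_scope.
Local Open Scope ereal_scope.

Theorem lemma2p2 (R : realType) (op : \bar R -> \bar R -> \bar R) (one : \bar R)
  (Hpm : pseudo_mult op one) :
  (exists t : \bar R, 0 < t /\ pm_finite op t) <-> pm_finite op one.
Proof.
case: Hpm => rng assoc _ _ mono one0 lid nzd ann.
split.
- move=> [t [tpos Ht]].
  have t0 : 0 <= t by apply: ltW.
  have c0 : 0 <= pmO op one.
    apply: le_ereal_inf_tmp => y [s /= s0 <-].
    exact: (rng _ _ (ltW s0) one0).
  rewrite /pm_finite.
  case: (eqVneq (pmO op one) 0) => // cne.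
  have cpos : 0 < pmO op one by rewrite lt_neqAle eq_sym cne c0.
  have le : op (pmO op one) t <= 0.
    rewrite -Ht; apply: le_ereal_inf_tmp => y [s /= s0 <-].
    have s0' : 0 <= s by apply: ltW.
    rewrite -{2}(lid t t0) -assoc //.
    apply: mono => //.
    by apply: ereal_inf_lbound; exists s.
  have ge : 0 <= op (pmO op one) t by exact: (rng _ _ c0 t0).
  have : op (pmO op one) t = 0 by apply/eqP; rewrite eq_le le ge.
  move/(nzd _ _ c0 t0); case=> h.
  + by move: cne; rewrite h eqxx.
  + by move: tpos; rewrite h ltxx.
- move=> H; exists one; split => //.
  rewrite lt_neqAle one0 andbT; apply/negP => /eqP h.
  have := lid 1%E; rewrite -h (ann 1%E lee01).1 => /(_ lee01) /eqP.
  by rewrite eq_sym onee_eq0.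
Qed.
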